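(* Let $V$ be a countable set, $\Omega_0$ a finite set, $\Omega=\Omega_0^V$, $q\in\mathbb N$, and let $\gamma=(\gamma_\Lambda)_{\Lambda\Subset V}$ be a quasilocal $q$-specification. Let $f:\Omega^q\to\mathbb R$ be continuous and $\Lambda\Subset V$. Then the map $$(\eta_1,\dots,\eta_q)\mapsto\gamma^{\otimes q}_\Lambda f(\eta_1,\dots,\eta_q):=\int_{\Omega^q}f(\sigma_1,\dots,\sigma_q)\prod_{i=1}^q\gamma_\Lambda(d\sigma_i\mid\eta_1,\dots,\eta_q)$$ is continuous on $\Omega^q$.
   Context: $\Omega$ carries the product $\sigma$-algebra $\mathcal F$ and the topology of pointwise (coordinatewise) convergence: $\sigma^{(n)}\to\sigma$ iff $\sigma^{(n)}(x)\to\sigma(x)$ for every $x\in V$; $\Omega^q$ carries the product topology, and $f:\Omega^q\to\mathbb R$ is continuous if $f(w^{(n)})\to f(w)$ whenever $w^{(n)}\to w$. For $\Delta\subset V$, $\mathcal F_\Delta$ is the $\sigma$-algebra generated by coordinates in $\Delta$, $\mathcal F^q_{\Lambda^c}=(\mathcal F_{\Lambda^c})^{\otimes q}$. A probability $q$-kernel is a map $\gamma_\Lambda:\mathcal F\times\Omega^q\to[0,1]$ with $\gamma_\Lambda(\cdot\mid\eta_1,\dots,\eta_q)$ a probability measure and $\gamma_\Lambda(A\mid\cdot)$ $\mathcal F^q_{\Lambda^c}$-measurable; proper means $\gamma_\Lambda(A\mid\eta_1,\dots,\eta_q)=\frac1q\sum_i\mathbf 1_A(\eta_i)$ for $A\in\mathcal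 F_{\Lambda^c}$. Composition: $(\gamma_\Delta\gamma_\Lambda)(A\mid\eta)=\int_{\Omega^q}\gamma_\Lambda(A\mid\zeta_1,\dots,\zeta_q)\prod_i\gamma_\Delta(d\zeta_i\mid\eta)$. A $q$-specification is a family of proper probability $q$-kernels $(\gamma_\Lambda)_{\Lambda\Subset V}$ with $\gamma_\Delta\gamma_\Lambda=\gamma_\Delta$ for $\Lambda\subset\Delta\Subset V$. It is quasilocal if for each $\Lambda\Subset V$ and every event $A\in\mathcal F_\Lambda$ the map $(\omega_1,\dots,\omega_q)\mapsto\gamma_\Lambda(A\mid\omega_1,\dots,\omega_q)$ is continuous on $\Omega^q$. *)

(* Defs.v *)
From HB Require Import structures.
From mathcomp Require Import all_boot all_order all_algebra.
From mathcomp Require Import all_classical all_reals all_analysis measurable_realfun.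
Unset Printing Implicit Defensive.
Import Order.TTheory GRing.Theory Num.Theory.
Import numFieldNormedType.Exports.
Local Open Scope classical_set_scope.
Local Open Scope ring_scope.

(* Configuration space Omega = S^V (S = Omega_0 finite, assumed inhabited
   by s0 so that it can carry MathComp-Analysis' measurable structure). *)
Definition config (V : Type) {S : Type} (s0 : S) := V -> S.

Section ConfigInstances.
Variables (V : Type) (S : Type) (s0 : S).
HB.instance Definition _ := gen_eqMixin (config V s0).
HB.instance Definition _ := gen_choiceMixin (config V s0).
HB.instance Definition _ := isPointed.Build (config V s0) (fun _ => s0).
End ConfigInstances.

Definition cyl_gen {V S : Type} (s0 : S) (Delta : set V) : set (set (config V s0)) :=
  [set A | exists x, Delta x /\ exists B : set S, A = (fun sigma : config V s0 => sigma x) @^-1` B].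

Definition F_ {V S : Type} (s0 : S) (Delta : set V) : set (set (config V s0)) :=
  <<s cyl_gen s0 Delta >>.

Definition Omega (V : Type) {S : Type} (s0 : S) := g_sigma_algebraType (cyl_gen s0 (@setT V)).

(* F^q_Delta = (F_Delta)^{\otimes q} on Omega^q = 'I_q -> Omega *)
Definition Fq_ {V S : Type} (s0 : S) (q : nat) (Delta : set V)
  : set (set ('I_q -> Omega V s0)) :=
  <<s [set E | exists (i : 'I_q) (A : set (config V s0)),
         F_ s0 Delta A /\ E = (fun w : 'I_q -> Omega V s0 => w i) @^-1` A] >>.

(* Pointwise convergence in Omega^q (Omega_0 discrete) *)
Definition convq {V S : Type} {s0 : S} {q : nat}
  (w : nat -> ('I_q -> Omega V s0)) (w0 : 'I_q -> Omega V s0) : Prop :=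
  forall (i : 'I_q) (x : V), exists N : nat, forall n, (N <= n)%N -> w n i x = w0 i x.

Definition contq {R : realType} {V S : Type} {s0 : S} {q : nat}
  (f : ('I_q -> Omega V s0) -> R) : Prop :=
  forall w w0, convq w w0 -> (fun n => f (w n)) @ \oo --> f w0.

Definition upd {V S : Type} {s0 : S} {q : nat} (zeta : 'I_q -> Omega V s0)
  (n : nat) (sigma : Omega V s0) : 'I_q -> Omega V s0 :=
  fun j => if val j == n then sigma else zeta j.

(* iint mu g n zeta = integral of g over the coordinates 0..n-1 w.r.t. mu
   (iterated), the remaining coordinates being taken from zeta. *)
Fixpoint iint {R : realType} {V S : Type} {s0 : S} {q : nat}
  (mu : {measure set (Omega V s0) -> \bar R})
  (g : ('I_q -> Omega V s0) -> \bar R) (n : nat) (zeta : 'I_q -> Omega V s0)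
  : \bar R :=
  match n with
  | 0 => g zeta
  | n'.+1 => (\int[mu]_sigma iint mu g n' (upd zeta n' sigma))%E
  end.

(* \int_{Omega^q} g d(mu^{\otimes q}) written out as an iterated integral *)
Definition prod_int {R : realType} {V S : Type} {s0 : S} {q : nat}
  (mu : {measure set (Omega V s0) -> \bar R})
  (g : ('I_q -> Omega V s0) -> \bar R) (eta : 'I_q -> Omega V s0) : \bar R :=
  iint mu g q eta.

Definition finite_subset {V : Type} (L : set V) := finite_set L.

Definition is_qkernel {R : realType} {V S : Type} {s0 : S} {q : nat} (L : set V)
  (g : ('I_q -> Omega V s0) -> probability (Omega V s0) R) : Prop :=
  forall A : set (Omega V s0), measurable A ->
    forall B : set (\bar R), measurable B ->
      Fq_ s0 q (~` L) ((fun eta => g eta A) @^-1` B).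

Definition is_proper {R : realType} {V S : Type} {s0 : S} {q : nat} (L : set V)
  (g : ('I_q -> Omega V s0) -> probability (Omega V s0) R) : Prop :=
  forall A : set (Omega V s0), F_ s0 (~` L) A -> forall eta,
    g eta A = ((q%:R)^-1 * \sum_(i < q) \1_A (eta i))%:E.

Definition kcomp {R : realType} {V S : Type} {s0 : S} {q : nat}
  (gD gL : ('I_q -> Omega V s0) -> probability (Omega V s0) R)
  (A : set (Omega V s0)) (eta : 'I_q -> Omega V s0) : \bar R :=
  prod_int (gD eta) (fun zeta => gL zeta A) eta.

Definition is_qspec {R : realType} {V S : Type} {s0 : S} {q : nat}
  (gamma : set V -> ('I_q -> Omega V s0) -> probability (Omega V s0) R) : Prop :=
  (forall L, finite_subset L -> is_qkernel L (gamma L) /\ is_proper L (gamma L)) /\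
  (forall L D, finite_subset L -> finite_subset D -> L `<=` D ->
     forall A : set (Omega V s0), measurable A ->
       forall eta, kcomp (gamma D) (gamma L) A eta = gamma D eta A).

Definition quasilocal {R : realType} {V S : Type} {s0 : S} {q : nat}
  (gamma : set V -> ('I_q -> Omega V s0) -> probability (Omega V s0) R) : Prop :=
  forall L, finite_subset L -> forall A : set (Omega V s0), F_ s0 L A ->
    contq (fun eta => fine (gamma L eta A)).

(* Main.v *)
From Pilot Require Import Defs.
From HB Require Import structures.
From mathcomp Require Import all_boot all_order all_algebra.
From mathcomp Require Import all_classical all_reals all_analysis measurable_realfun.
Import Order.TTheory GRing.Theory Num.Theory.
Import numFieldNormedType.Exports.
Local Open Scope classical_set_scope.
Local Open Scope ring_scope.
From mathcomp Require Import ring.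
Section S.
Context d (T : measurableType d) (R : realType).
Variable mu : {measure set T -> \bar R}.
Local Open Scope ereal_scope.
Import HBNNSimple.
Variable s : seq T.
Hypothesis us : uniq s.
Hypothesis m1 : forall p : T, measurable [set p].
Let S := [set x | x \in s].
Hypothesis mc : mu (~` S) = 0.

Lemma sub_fin_meas (A : set T) : A `<=` S -> measurable A.
Proof.
move=> AS.
have -> : A = \big[setU/set0]_(p <- s | `[< A p >]) [set p].
  apply/seteqP; split => x.
    move=> Ax; rewrite -bigcup_seq_cond; exists x => //=.
    by apply/andP; split; [exact: AS|exact/asboolP].
  by rewrite -bigcup_seq_cond => -[p /= /andP[_ /asboolP Ap] ->].
exact: bigsetU_measurable.
Qed.

Lemma mS : measurable S.
Proof. exact: sub_fin_meas. Qed.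

Lemma int_meas_ge0 (h : T -> \bar R) : measurable_fun setT h -> (forall x, 0 <= h x) ->
  \int[mu]_x h x = \sum_(p <- s) h p * mu [set p].
Proof.
move=> mh h0.
have -> : (setT : set T) = S `|` ~` S by rewrite setUv.
have mS' := mS.
rewrite integral_setU //; try exact: measurableC mS; try by rewrite setUv.
2: by rewrite disj_set2E setICr.
rewrite (@null_set_integral _ _ _ _ (~` S)) ?adde0 //; try exact: measurableC mS.
2: exact: measurable_funS mh.
have SE : S = \big[setU/set0]_(p <- s) [set p].
  apply/seteqP; split => x.
    by move=> xs; rewrite -bigcup_seq; exists x.
  by rewrite -bigcup_seq => -[p /= ps ->].
have E := @ge0_integral_bigsetU _ _ _ mu _ (fun p => [set p]) h s m1 us.
rewrite SE E //; try (by move=> i j /= _ _ [x [-> ->]]); try exact: measurable_funS mh.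
apply: eq_bigr => p _.
rewrite (eq_integral (cst (h p))); last by move=> x; rewrite inE /= => ->.
by rewrite integral_cst.
Qed.


Lemma int_ge0_any (f : T -> \bar R) : (forall x, 0 <= f x) ->
  \int[mu]_x f x = \sum_(p <- s) f p * mu [set p].
Proof.
move=> f0; apply/eqP; rewrite eq_le; apply/andP; split.
  rewrite ge0_integralTE //; apply: ge_ereal_sup => _ [h /= hf <-].
  rewrite -integralT_nnsfun int_meas_ge0 //; last first.
    by move=> x; rewrite lee_fin; exact: fun_ge0.
    by apply: measurableT_comp => //; exact: measurable_funPT.
  apply: lee_sum => p _; apply: lee_wpmul2r => //.
pose g x := if x \in s then f x else 0.
have mg : measurable_fun setT g.
  move=> _ B mB; rewrite setTI.
  have -> : g @^-1` B = (S `&` g @^-1` B) `|` (~` S `&` g @^-1` B).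
    by rewrite -setIUl setUv setTI.
  apply: measurableU; first by apply: sub_fin_meas => x [].
  have [B0|B0] := pselect (B 0).
    have -> : ~` S `&` g @^-1` B = ~` S.
      apply/seteqP; split => x; first by case.
      move=> nS; split => //; rewrite /g /= ifN //; exact/negP.
    exact: measurableC mS.
  have -> : ~` S `&` g @^-1` B = set0.
    apply/seteqP; split => x //; case=> nS; rewrite /g /= ifN //; exact/negP.
  exact: measurable0.
have g0 : forall x, 0 <= g x by move=> x; rewrite /g; case: ifP.
have -> : \sum_(p <- s) f p * mu [set p] = \int[mu]_x g x.
  rewrite int_meas_ge0 // big_seq [RHS]big_seq; apply: eq_bigr => p ps.
  by rewrite /g ps.
rewrite !ge0_integralTE //; apply: ereal_sup_le => _ [h /= hg <-].
exists h => //= x; apply: (le_trans (hg x)); rewrite /g; case: ifP => //.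
Qed.

Lemma int_fin (f : T -> \bar R) : (forall p, p \in s -> f p \is a fin_num) ->
  (forall p, mu [set p] \is a fin_num) ->
  \int[mu]_x f x = (\sum_(p <- s) fine (f p) * fine (mu [set p]))%:E.
Proof.
move=> ff fm.
have fp : forall p, p \in s -> f^\+ p \is a fin_num.
  by move=> p ps; rewrite funeposE; have := ff p ps; case: (f p) => // r _; rewrite -EFin_max.
have fn : forall p, p \in s -> f^\- p \is a fin_num.
  by move=> p ps; rewrite funenegE; have := ff p ps; case: (f p) => // r _; rewrite -EFinN -EFin_max.
rewrite integralE !int_ge0_any //; try exact: funeneg_ge0; try exact: funepos_ge0.
have E (g : T -> \bar R) : (forall p, p \in s -> g p \is a fin_num) ->
    \sum_(p <- s) g p * mu [set p] = (\sum_(p <- s) fine (g p) * fine (mu [set p]))%:E.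
  move=> gf; rewrite -sumEFin big_seq [RHS]big_seq; apply: eq_bigr => p ps.
  by rewrite EFinM !fineK //; exact: gf.
rewrite (E _ fp) (E _ fn) -EFinB -sumrB; congr EFin; apply: eq_big_seq => p ps.
rewrite -mulrBl -fineB ?fp ?fn //.
by have := congr1 (fun g => g p) (funeposneg f) => /= <-.
Qed.

End S.
Lemma sigma_inv {T : Type} (G : set (set T)) (r : T -> T -> Prop) :
  (forall E, G E -> forall x y, r x y -> (E x <-> E y)) ->
  forall E, <<s G >> E -> forall x y, r x y -> (E x <-> E y).
Proof.
move=> HG E HE.
pose M := [set E : set T | forall x y, r x y -> (E x <-> E y)].
have sM : sigma_algebra setT M.
  split.
  - by move=> x y _; split.
  - move=> A MA x y rxy; rewrite /setD /=; have := MA x y rxy; tauto.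
  - move=> A MA x y rxy; split => -[n _ Anx]; exists n => //; by have [] := MA n x y rxy; auto.
exact: (smallest_sub sM HG HE).
Qed.

Section P2.
Context (R : realType) (V : countType) (S : finType) (s0 : S) (q : nat).
Local Notation Om := (Omega V s0).
Variable L : set V.

Definition eqo (xi xi' : Om) := forall x, ~ L x -> xi x = xi' x.
Definition eqoq (w w' : 'I_q -> Om) := forall i, eqo (w i) (w' i).

Lemma F_inv (E : set Om) : F_ s0 (~` L) E -> forall x y, eqo x y -> (E x <-> E y).
Proof.
apply: sigma_inv => _ [z [nz [B ->]]] x y exy /=.
by rewrite exy.
Qed.

Lemma Fq_inv (E : set ('I_q -> Om)) : Fq_ s0 q (~` L) E ->
  forall w w', eqoq w w' -> (E w <-> E w').
Proof.
apply: sigma_inv => _ [i [A [FA ->]]] w w' ew /=.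
exact: F_inv.
Qed.

Lemma F_sub (D : set V) : F_ s0 D `<=` (measurable : set (set Om)).
Proof.
apply: smallest_sub; first exact: smallest_sigma_algebra.
move=> _ [x [_ [B ->]]]; apply: sub_sigma_algebra; exists x; split => //; by exists B.
Qed.

Lemma F_cap (D : set V) (P : V -> Prop) (p : Om) : (forall x, P x -> D x) ->
  F_ s0 D [set sig : Om | forall x, P x -> sig x = p x].
Proof.
move=> PD.
have -> : [set sig : Om | forall x, P x -> sig x = p x] =
   ~` \bigcup_(x : V) ~` [set sig : Om | P x -> sig x = p x].
  apply/seteqP; split => sig.
    by move=> H [x _ /=]; apply; apply: H.
  move=> /= H x Px; apply: contra_notP H => ne; exists x => //= /(_ Px).
  exact: ne.
have mC : forall A : set (g_sigma_algebraType (cyl_gen s0 D)), measurable A -> measurable (~` A).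
  by move=> A; apply: measurableC.
apply: (mC); apply: (@countable_bigcupT_measurable _ (g_sigma_algebraType (cyl_gen s0 D)) V).
  exact: countableP.
move=> x; apply: mC.
have [Px|nPx] := pselect (P x).
  have -> : [set sig : Om | P x -> sig x = p x] = (fun sig : Om => sig x) @^-1` [set p x].
    by apply/seteqP; split => sig /=; [apply|move=> ->].
  apply: sub_sigma_algebra; exists x; split; first exact: PD.
  by exists [set p x].
have -> : [set sig : Om | P x -> sig x = p x] = setT.
  by apply/seteqP; split => sig // _ /nPx.
exact: measurableT.
Qed.

Lemma meas1 (p : Om) : measurable [set p].
Proof.
have -> : [set p] = [set sig : Om | forall x, setT x -> sig x = p x].
  apply/seteqP; split => sig /=; first by move=> ->.
  by move=> H; apply/funext => x; apply: H.
exact: F_cap.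
Qed.

Lemma FQ (xi : Om) : F_ s0 (~` L) [set sig | eqo sig xi].
Proof. exact: F_cap. Qed.

Lemma FA (p : Om) : F_ s0 L [set sig : Om | forall x, L x -> sig x = p x].
Proof. exact: F_cap. Qed.

Lemma FU (eta : 'I_q -> Om) : F_ s0 (~` L) [set sig | exists i, eqo sig (eta i)].
Proof.
have -> : [set sig | exists i, eqo sig (eta i)] =
    \big[setU/set0]_(i <- enum 'I_q) [set sig | eqo sig (eta i)].
  apply/seteqP; split => sig.
    by move=> [i ei]; rewrite -bigcup_seq; exists i => //=; rewrite mem_enum.
  by rewrite -bigcup_seq => -[i _ ei]; exists i.
apply: (@bigsetU_measurable _ (g_sigma_algebraType (cyl_gen s0 (~` L)))).
move=> i _; exact: FQ.
Qed.

End P2.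
Arguments eqo {V S s0} L xi xi'.
Arguments eqoq {V S s0 q} L w w'.
Arguments F_inv {V S s0 L E}.
Arguments Fq_inv {V S s0 q L E}.
Arguments FQ {V S s0} L xi.
Arguments FU {V S s0 q} L eta.
Arguments FA {V S s0} L p.
Arguments meas1 {V S s0} p.
Arguments F_sub {V S s0 D}.
Lemma exmax (R : realType) (I : finType) (i0 : I) (F : I -> R) : exists i, forall j, F j <= F i.
Proof.
case: (@arg_maxP _ R I i0 xpredT F isT) => k _ Hk.
by exists k => j; apply: Hk.
Qed.

Lemma cvg_sumR (R : realType) (I : finType) (F : I -> nat -> R) (a : I -> R) :
  (forall i, F i n @[n --> \oo] --> a i) -> (\sum_(i : I) F i n) @[n --> \oo] --> \sum_(i : I) a i.
Proof.
move=> h; apply: cvg_big => //.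
exact: add_continuous.
Qed.

Section P3.
Context (R : realType) (V : countType) (S : finType) (s0 : S) (q' : nat).
Local Notation q := q'.+1.
Local Notation Om := (Omega V s0).
Variable gamma : set V -> ('I_q -> Om) -> probability Om R.
Hypothesis Hspec : is_qspec gamma.
Variable lL : seq V.
Local Notation L := [set` lL].
Local Notation mu eta := (gamma L eta).
Hypothesis HL : finite_subset L.
Local Notation TT := {ffun seq_sub lL -> S}.

Definition glue (t : TT) (xi : Om) : Om :=
  fun x => match (insub x : option (seq_sub lL)) with Some y => t y | None => xi x end.

Lemma glue_eqo t xi : eqo L (glue t xi) xi.
Proof. by move=> x /= nx; rewrite /glue insubN //; apply/negP. Qed.

Lemma glue_L t xi xi' x : L x -> glue t xi x = glue t xi' x.
Proof. by move=> Lx; rewrite /glue insubT. Qed.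

Lemma glue_complete (p xi : Om) : eqo L p xi -> p = glue [ffun y => p (val y)] xi.
Proof.
move=> e; apply/funext => x; rewrite /glue; case: insubP => [y _ <-|nx].
  by rewrite ffunE.
by apply: e; apply/negP.
Qed.

Lemma glue_inj xi : injective (glue ^~ xi).
Proof.
move=> t t' e; apply/ffunP => y.
have := congr1 (fun g => g (val y)) e; rewrite /glue /=.
by rewrite valK.
Qed.

Lemma finmu (eta : 'I_q -> Om) (A : set Om) : measurable A -> mu eta A \is a fin_num.
Proof. by move=> mA; apply: fin_num_measure. Qed.

Lemma K1 (w w' : 'I_q -> Om) A : measurable A -> eqoq L w w' -> mu w A = mu w' A.
Proof.
move=> mA e.
have := (Hspec.1 L HL).1 A mA [set mu w A] (emeasurable_set1 _).
by move=> H; have [h _] := Fq_inv H w w' e; rewrite -h.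
Qed.

Lemma K2 (A : set Om) (eta : 'I_q -> Om) : F_ s0 (~` L) A ->
  mu eta A = (((q%:R)^-1 : R) * \sum_(i < q) \1_A (eta i))%:E.
Proof. by move=> FA; apply: (Hspec.1 L HL).2. Qed.

Lemma K3 (A : set Om) (eta : 'I_q -> Om) : measurable A -> Pilot.Defs.kcomp (gamma L) (gamma L) A eta = mu eta A.
Proof. by move=> mA; apply: Hspec.2. Qed.

Lemma K2Q (eta : 'I_q -> Om) (xi : Om) : mu eta [set sig | eqo L sig xi] =
  (((q%:R)^-1 : R) * \sum_(i < q) \1_[set sig | eqo L sig xi] (eta i))%:E.
Proof. by apply: K2; apply: FQ. Qed.

Definition supp (eta : 'I_q -> Om) : seq Om :=
  undup [seq glue t (eta i) | i <- enum 'I_q, t <- enum TT].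

Lemma supp_mem (eta : 'I_q -> Om) (p : Om) : p \in supp eta <-> exists i, eqo L p (eta i).
Proof.
rewrite mem_undup; split.
  move=> /allpairsP [[i t] /= [_ _ ->]]; exists i; exact: glue_eqo.
move=> [i e]; apply/allpairsP; exists (i, [ffun y => p (val y)]) => /=.
by rewrite !mem_enum; split => //; apply: glue_complete.
Qed.

Lemma supp_uniq (eta : 'I_q -> Om) : uniq (supp eta).
Proof. exact: undup_uniq. Qed.

Lemma supp_null (eta : 'I_q -> Om) : mu eta (~` [set` supp eta]) = 0.
Proof.
have -> : [set` supp eta] = [set sig | exists i, eqo L sig (eta i)].
  by apply/seteqP; split => p /= /supp_mem.
rewrite probability_setC; last by apply: F_sub; apply: FU.
rewrite K2; last exact: FU.
rewrite (eq_bigr (fun _ => 1)); last first.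
  by move=> i _; rewrite indicE; rewrite mem_set //; exists i.
by rewrite sumr_const card_ord mulVf ?subee // pnatr_eq0.
Qed.

Lemma int_supp (eta : 'I_q -> Om) (g : Om -> \bar R) : (forall p, p \in supp eta -> g p \is a fin_num) ->
  (\int[mu eta]_x g x)%E =
  (\sum_(p <- supp eta) fine (g p) * fine (mu eta [set p]))%:E.
Proof.
move=> gf; apply: int_fin => //.
- exact: supp_uniq.
- exact: meas1.
- exact: supp_null.
- by move=> p; apply: finmu; exact: meas1.
Qed.

Lemma eqo_refl (x : Om) : eqo L x x. Proof. by []. Qed.
Lemma eqo_sym {x y : Om} : eqo L x y -> eqo L y x. Proof. by move=> e z nz; rewrite e. Qed.
Lemma eqo_trans {x y z : Om} : eqo L x y -> eqo L y z -> eqo L x z.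
Proof. by move=> e1 e2 u nu; rewrite e1 // e2. Qed.

Definition II (xi p : Om) : R := \1_[set sig : Om | eqo L sig xi] p.

Lemma IIE (xi p : Om) : II xi p = if pselect (eqo L p xi) then 1 else 0.
Proof.
rewrite /II indicE; case: pselect => e.
  by rewrite mem_set.
by rewrite memNset.
Qed.

Lemma II0 (xi p : Om) : ~ eqo L p xi -> II xi p = 0.
Proof. by move=> ne; rewrite IIE; case: pselect. Qed.

Lemma II1 (xi p : Om) : eqo L p xi -> II xi p = 1.
Proof. by move=> e; rewrite IIE; case: pselect. Qed.

Lemma II_sym (xi p : Om) : II xi p = II p xi.
Proof.
rewrite !IIE; case: pselect => e; case: pselect => e' //; exfalso.
  by apply: e'; exact: eqo_sym.
by apply: e; exact: eqo_sym.
Qed.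

Lemma II_eqo (xi xi' p : Om) : eqo L xi xi' -> II xi p = II xi' p.
Proof.
move=> e; rewrite !IIE; case: pselect => e1; case: pselect => e2 //; exfalso.
  by apply: e2; exact: (eqo_trans e1 e).
by apply: e1; exact: (eqo_trans e2 (eqo_sym e)).
Qed.

Lemma QA (eta : 'I_q -> Om) (xi : Om) :
  \sum_(p <- supp eta) II xi p * fine (mu eta [set p]) =
  (q%:R)^-1 * \sum_(i < q) II xi (eta i).
Proof.
have mQ : measurable [set sig : Om | eqo L sig xi] by apply: F_sub; apply: FQ.
have := @int_supp eta (fun x => (II xi x)%:E) (fun _ _ => erefl).
rewrite /II integral_indic // setIT => h.
have h3 := etrans (esym h) (K2Q eta xi).
by case: h3 => <-.
Qed.

Lemma sum_inv (eta : 'I_q -> Om) (phi : Om -> R) :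
  (forall x y, eqo L x y -> phi x = phi y) ->
  \sum_(p <- supp eta) phi p * fine (mu eta [set p]) =
  (q%:R)^-1 * \sum_(i < q) phi (eta i).
Proof.
move=> hphi.
pose c p := \sum_(k < q) II (eta k) p.
have cE i p : II (eta i) p = 1 -> c p = c (eta i).
  move=> h; apply: eq_bigr => k _; rewrite II_sym [RHS]II_sym; apply: II_eqo.
  move: h; rewrite IIE; case: pselect => [e _|_ /esym/eqP]; [exact: e | by rewrite oner_eq0].
have termE i p : II (eta i) p * phi (eta i) = II (eta i) p * phi p.
  rewrite IIE; case: pselect => e; last by rewrite !mul0r.
  by rewrite (hphi _ _ e).
have cn0 i : c (eta i) != 0.
  rewrite /c; apply/negP => /eqP /psumr_eq0P H.
  have : II (eta i) (eta i) = 0.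
    by apply: H => // k _; rewrite IIE; case: pselect.
  rewrite IIE; case: pselect => [_ /eqP|]; [by rewrite oner_eq0 | move=> ne; exfalso; exact: ne].
have step1 : forall p, p \in supp eta ->
    phi p = \sum_(i < q) II (eta i) p * phi (eta i) / c p.
  move=> p /supp_mem [i e].
  have ci : c p = c (eta i) by apply: cE; rewrite IIE; case: pselect.
  rewrite -mulr_suml; under eq_bigr do rewrite termE.
  rewrite -mulr_suml (_ : \sum_(i0 < q) II (eta i0) p = c p) //.
  by rewrite mulrAC divff ?mul1r // ci.
rewrite (@eq_big_seq _ _ _ _ _ _ (fun p => (\sum_(i < q) II (eta i) p * phi (eta i) / c p) * fine (mu eta [set p]))); last first.
  by move=> p ps; rewrite -step1.
under eq_bigr do rewrite mulr_suml.
rewrite exchange_big /= mulr_sumr; apply: eq_bigr => i _.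
have inner : \sum_(p <- supp eta) II (eta i) p * phi (eta i) / c p * fine (mu eta [set p])
   = phi (eta i) / c (eta i) * \sum_(p <- supp eta) II (eta i) p * fine (mu eta [set p]).
  rewrite mulr_sumr; apply: eq_bigr => p _.
  have [h|h] : II (eta i) p = 1 \/ II (eta i) p = 0.
    by rewrite IIE; case: pselect; [left|right].
    by rewrite h (cE _ _ h) !mul1r.
  by rewrite h !mul0r mulr0.
rewrite inner QA.
have -> : \sum_(k < q) II (eta i) (eta k) = c (eta i).
  by apply: eq_bigr => k _; rewrite II_sym.
by rewrite mulrCA -mulrA mulVf // mulr1.
Qed.

Fixpoint RI (w : 'I_q -> Om) (H : ('I_q -> Om) -> R) (n : nat) (z : 'I_q -> Om) : R :=
  match n with
  | 0 => H z
  | n'.+1 => (q%:R)^-1 * \sum_(i < q) RI w H n' (Pilot.Defs.upd z n' (w i))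
  end.

Lemma upd_eqoq (z z' : 'I_q -> Om) n (sig sig' : Om) : eqoq L z z' -> eqo L sig sig' ->
  eqoq L (Pilot.Defs.upd z n sig) (Pilot.Defs.upd z' n sig').
Proof. by move=> e es j; rewrite /Pilot.Defs.upd; case: ifP. Qed.

Lemma RI_inv w H : (forall z z', eqoq L z z' -> H z = H z') ->
  forall n z z', eqoq L z z' -> RI w H n z = RI w H n z'.
Proof.
move=> hH; elim=> [|n IH] z z' e /=; first exact: hH.
congr (_ * _); apply: eq_bigr => i _; apply: IH; apply: upd_eqoq => //.
Qed.

Lemma iint_RI (w : 'I_q -> Om) (G : ('I_q -> Om) -> \bar R) :
  (forall z, G z \is a fin_num) -> (forall z z', eqoq L z z' -> G z = G z') ->
  forall n z, Pilot.Defs.iint (mu w) G n z = (RI w (fine \o G) n z)%:E.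
Proof.
move=> Gf Gi; elim=> [|n IH] z /=; first by rewrite fineK.
rewrite (eq_integral (fun sig => (RI w (fine \o G) n (Pilot.Defs.upd z n sig))%:E)); last first.
  by move=> sig _; rewrite IH.
rewrite int_supp // /=; congr EFin.
apply: (@sum_inv w (fun sig => RI w (fine \o G) n (Pilot.Defs.upd z n sig))).
move=> x y e; apply: RI_inv; last exact: upd_eqoq.
by move=> z1 z2 e12 /=; rewrite (Gi _ _ e12).
Qed.

Lemma RI_lin w H1 H2 (a b : R) : forall n z,
  RI w (fun z => a * H1 z + b * H2 z) n z = a * RI w H1 n z + b * RI w H2 n z.
Proof.
elim=> [|n IH] z //=.
under eq_bigr do rewrite IH.
rewrite big_split /= -!mulr_sumr mulrDr !mulrA ![_ * a]mulrC ![_ * b]mulrC.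
by rewrite -!mulrA.
Qed.

Section maxp.
Variable eta : 'I_q -> Om.
Definition fam (z : 'I_q -> Om) := forall j, exists i, z j = eta i.

Lemma upd_fam {z} n i {v : 'I_q -> Om} : fam z -> fam v -> fam (Pilot.Defs.upd z n (v i)).
Proof. by move=> fz fv j; rewrite /Pilot.Defs.upd; case: ifP => _; [exact: fv|exact: fz]. Qed.

Lemma RI_max (H : ('I_q -> Om) -> R) (M : R) (v : 'I_q -> Om) :
  fam v -> (forall z, fam z -> H z <= M) ->
  forall n z, fam z -> (RI v H n z <= M) /\ (RI v H n z = M -> H (fun j => if (j < n)%N then v ord0 else z j) = M).
Proof.
move=> fv hH; elim=> [|n IH] z fz /=.
  split; first exact: hH.
  by move=> <-; congr H; apply/funext => j.
have tle i : RI v H n (Pilot.Defs.upd z n (v i)) <= M.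
  by have [] := IH _ (upd_fam n i fz fv).
have qpos : 0 < (q%:R : R) by rewrite ltr0n.
have avg : (q%:R)^-1 * \sum_(i < q) M = M.
  by rewrite sumr_const card_ord -[M *+ q]mulr_natl mulrA mulVf ?mul1r // pnatr_eq0.
split.
  rewrite -[leRHS]avg ler_pM2l ?invr_gt0 //.
  by apply: ler_sum => i _; exact: tle.
move=> eqM.
have h0 : forall i, RI v H n (Pilot.Defs.upd z n (v i)) = M.
  have : \sum_(i < q) (M - RI v H n (Pilot.Defs.upd z n (v i))) = 0.
    have sR : \sum_(i < q) RI v H n (Pilot.Defs.upd z n (v i)) = M *+ q.
      by rewrite -eqM -[(_ * _) *+ q]mulr_natl mulrA mulfV ?mul1r // pnatr_eq0.
    by rewrite sumrB sumr_const card_ord sR subrr.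
  move=> /psumr_eq0P H0 i; apply/eqP; rewrite eq_sym -subr_eq0; apply/eqP.
  by apply: H0 => // k _; rewrite subr_ge0.
have [_ ] := IH _ (upd_fam n ord0 fz fv).
move=> /(_ (h0 ord0)) <-; congr H; apply/funext => j.
rewrite /Pilot.Defs.upd ltnS leq_eqVlt; case: (ltngtP j n) => //= ->.
Qed.

Lemma fam_ffun z : fam z -> exists k : {ffun 'I_q -> 'I_q}, z = (fun j => eta (k j)).
Proof.
move=> fz; have [f hf] := choice fz.
by exists [ffun j => f j]; apply/funext => j; rewrite ffunE.
Qed.

Lemma harm_le0 (H : ('I_q -> Om) -> R) :
  (forall z, H z = RI z H q z) -> (forall u, H (fun _ => u) = 0) -> H eta <= 0.
Proof.
move=> harm h0.
have [ks hks] := @exmax R _ [ffun j => j] (fun k : {ffun 'I_q -> 'I_q} => H (fun j => eta (k j))).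
pose v := fun j => eta (ks j).
have fv : fam v by move=> j; exists (ks j).
have hM : forall z, fam z -> H z <= H v.
  by move=> z /fam_ffun [k ->]; exact: hks.
have [_ eq] := @RI_max H (H v) v fv hM q v fv.
have := eq (esym (harm v)).
have -> : (fun j : 'I_q => if (j < q)%N then v ord0 else v j) = (fun _ => v ord0).
  by apply/funext => j; rewrite ltn_ord.
rewrite h0 => Hv0.
have := hM eta (fun j => ex_intro _ j erefl).
by rewrite -Hv0.
Qed.

End maxp.

Lemma harmA (A : set Om) (z : 'I_q -> Om) : measurable A ->
  fine (mu z A) = RI z (fun z' => fine (mu z' A)) q z.
Proof.
move=> mA; have := K3 A z mA.
rewrite /Pilot.Defs.kcomp /Pilot.Defs.prod_int.
rewrite (@iint_RI z (fun zeta => mu zeta A)).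
- by move=> <-.
- by move=> z'; exact: finmu.
- by move=> z1 z2 e; exact: K1.
Qed.

Lemma struct (eta : 'I_q -> Om) (p : Om) :
  fine (mu eta [set p]) =
  fine (mu (fun _ => p) [set p]) * ((q%:R)^-1 * \sum_(i < q) II p (eta i)).
Proof.
pose Qp := [set sig : Om | eqo L sig p].
have mQ : measurable Qp by apply: F_sub; apply: FQ.
pose X z := fine (mu z [set p]).
pose Z z := fine (mu z Qp).
pose c0 := X (fun _ => p).
have ZE z : Z z = (q%:R)^-1 * \sum_(i < q) II p (z i).
  by rewrite /Z K2Q.
have ZC u : Z (fun _ => u) = II p u.
  rewrite ZE sumr_const card_ord -[II p u *+ q]mulr_natl mulrA mulVf ?mul1r // pnatr_eq0.
have XC u : ~ eqo L u p -> X (fun _ => u) = 0.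
  move=> ne; rewrite /X.
  have h1 : (mu (fun _ => u) [set p] <= mu (fun _ => u) Qp)%E.
    by apply: le_measure; rewrite ?inE //; [exact: meas1 | move=> x -> ].
  have h2 : mu (fun _ => u) Qp = 0.
    rewrite K2Q sumr_const card_ord.
    by rewrite -/(II p u) II0 // mul0rn mulr0.
  have h3 : mu (fun _ => u) [set p] = 0.
    by apply/le_anti; rewrite measure_ge0 andbT -h2.
  by rewrite h3.
have XC' u : eqo L u p -> X (fun _ => u) = c0.
  move=> e; rewrite /X /c0; congr fine; apply: K1; first exact: meas1.
  by move=> i.
have hX z : X z = RI z X q z by apply: harmA; exact: meas1.
have hZ z : Z z = RI z Z q z by apply: harmA.
pose D z := 1 * X z + (- c0) * Z z.
pose D' z := (-1) * X z + c0 * Z z.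
have hD z : D z = RI z D q z by rewrite RI_lin -hX -hZ.
have hD' z : D' z = RI z D' q z by rewrite RI_lin -hX -hZ.
have D0 u : D (fun _ => u) = 0.
  rewrite /D ZC; have [e|ne] := pselect (eqo L u p).
    by rewrite XC' // II1 // mul1r mulr1 addrN.
  by rewrite XC // II0 // !mulr0 addr0.
have D'0 u : D' (fun _ => u) = 0.
  have := D0 u; rewrite /D /D' => h.
  by rewrite -[LHS]opprK opprD -!mulNr opprK h oppr0.
have le1 := @harm_le0 eta D hD D0.
have le2 := @harm_le0 eta D' hD' D'0.
have DE : D eta = 0.
  apply/le_anti; rewrite le1 /=.
  by move: le2; rewrite /D /D' -oppr_le0 opprD -!mulNr opprK.
move: DE; rewrite /D mul1r mulNr => /eqP; rewrite subr_eq0 => /eqP XE.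
by rewrite -/(X eta) XE ZE.
Qed.

Lemma sum_class (eta : 'I_q -> Om) (i : 'I_q) (G : Om -> R) :
  \sum_(p <- supp eta) II (eta i) p * G p = \sum_(t : TT) G (glue t (eta i)).
Proof.
pose P := fun p : Om => `[< eqo L p (eta i) >].
rewrite (eq_bigr (fun p => if P p then G p else 0)); last first.
  move=> p _; rewrite /P IIE; case: pselect => e.
    by rewrite mul1r; case: asboolP.
  by rewrite mul0r; case: asboolP.
rewrite -big_mkcond -big_filter.
have pe : perm_eq (seq.filter P (supp eta)) (map (glue ^~ (eta i)) (enum TT)).
  apply: uniq_perm.
  - by rewrite filter_uniq // supp_uniq.
  - by rewrite map_inj_uniq ?enum_uniq //; exact: glue_inj.
  move=> x; rewrite mem_filter; apply/andP/mapP.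
    move=> [/asboolP e _]; exists [ffun y => x (val y)]; first by rewrite mem_enum.
    exact: glue_complete.
  move=> [t _ ->]; split; first exact/asboolP/glue_eqo.
  by apply/supp_mem; exists i; apply: glue_eqo.
by rewrite (perm_big _ pe) big_map big_enum.
Qed.

Definition c0 (p : Om) := fine (mu (fun _ => p) [set p]).

Lemma int_formula (eta : 'I_q -> Om) (g : Om -> \bar R) :
  (forall p, g p \is a fin_num) ->
  (\int[mu eta]_x g x)%E =
  ((q%:R)^-1 * \sum_(i < q) \sum_(t : TT)
      c0 (glue t (eta i)) * fine (g (glue t (eta i))))%:E.
Proof.
move=> gf; rewrite int_supp //; congr EFin.
under eq_bigr do rewrite struct.
rewrite -/c0.
transitivity (\sum_(p <- supp eta) (q%:R)^-1 * \sum_(i < q) II (eta i) p * (c0 p * fine (g p))).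
  apply: eq_bigr => p _; rewrite -mulr_suml.
  have -> : \sum_(i < q) II (eta i) p = \sum_(i < q) II p (eta i).
    by apply: eq_bigr => i _; rewrite II_sym.
  rewrite /c0; ring.
rewrite -mulr_sumr exchange_big /=; congr (_ * _); apply: eq_bigr => i _.
by rewrite sum_class.
Qed.

Hypothesis Hql : quasilocal gamma.
Variable f : ('I_q -> Om) -> R.
Hypothesis Hf : contq f.

Fixpoint J (eta : 'I_q -> Om) (n : nat) (z : 'I_q -> Om) : R :=
  match n with
  | 0 => f z
  | n'.+1 => (q%:R)^-1 * \sum_(i < q) \sum_(t : TT)
      c0 (glue t (eta i)) * J eta n' (Pilot.Defs.upd z n' (glue t (eta i)))
  end.

Lemma iint_J (eta : 'I_q -> Om) : forall n z,
  Pilot.Defs.iint (mu eta) (fun z => (f z)%:E) n z = (J eta n z)%:E.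
Proof.
elim=> [|n IH] z //=.
rewrite (eq_integral (fun sig => (J eta n (Pilot.Defs.upd z n sig))%:E)); last first.
  by move=> sig _; rewrite IH.
by rewrite int_formula.
Qed.

Definition Aset (t : TT) : set Om :=
  [set sig : Om | forall x, L x -> sig x = glue t (fun _ => s0) x].

Lemma c0_A t (xi : Om) : c0 (glue t xi) = fine (mu (fun _ => xi) (Aset t)).
Proof.
have mA : measurable (Aset t) by apply: F_sub; apply: FA.
have mQ : measurable [set sig : Om | eqo L sig xi] by apply: F_sub; apply: FQ.
rewrite /c0 (@K1 _ (fun _ => xi) _ (meas1 _)); last by move=> i; exact: glue_eqo.
congr fine.
rewrite (measureDI _ mA mQ).
have -> : Aset t `&` [set sig | eqo L sig xi] = [set glue t xi].
  apply/seteqP; split => sig.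
    move=> [As Qs]; rewrite /= (glue_complete _ _ Qs); congr glue.
    apply/ffunP => y; rewrite ffunE As; last by apply: valP.
    by rewrite /glue valK.
  move=> -> /=; split; last exact: glue_eqo.
  by move=> x Lx; exact: glue_L.
rewrite [X in (X + _)%E](_ : _ = 0) ?add0e //.
apply/le_anti; rewrite measure_ge0 andbT.
have h1 : (mu (fun _ => xi) (Aset t `\` [set sig | eqo L sig xi]) <=
           mu (fun _ => xi) (~` [set sig | eqo L sig xi]))%E.
  by apply: le_measure; rewrite ?inE; [exact: measurableD | exact: measurableC | move=> x []].
apply: (le_trans h1); rewrite probability_setC // K2Q.
rewrite (eq_bigr (fun _ => 1)); last by move=> i _; rewrite -/(II xi xi) II1.
by rewrite sumr_const card_ord -[1 *+ q]/(q%:R) mulVf ?subee // pnatr_eq0.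
Qed.

Lemma c0_cont t (xis : nat -> Om) (xi : Om) :
  (forall x, exists N, forall n, (N <= n)%N -> xis n x = xi x) ->
  c0 (glue t (xis n)) @[n --> \oo] --> c0 (glue t xi).
Proof.
move=> h; under eq_cvg do rewrite c0_A; rewrite c0_A.
apply: (Hql L HL (Aset t) (FA L (glue t (fun _ => s0))) (fun n _ => xis n) (fun _ => xi)).
by move=> i x; apply: h.
Qed.

Lemma J_cont : forall n (etas zs : nat -> 'I_q -> Om) eta z,
  convq etas eta -> convq zs z ->
  J (etas m) n (zs m) @[m --> \oo] --> J eta n z.
Proof.
elim=> [|n IH] etas zs eta z ce cz /=; first exact: Hf.
apply: cvgMl_tmp; apply: cvg_sumR => i; apply: cvg_sumR => t.
apply: cvgM.
  by apply: c0_cont => x; apply: ce.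
apply: IH => // j x; rewrite /Pilot.Defs.upd; case: ifP => _; last exact: cz.
rewrite /glue; case: insubP => [y _ _|_]; last exact: ce.
by exists 0%N.
Qed.

End P3.
Theorem mainTheorem4 (R : realType) (V : countType) (S : finType) (s0 : S)
  (q : nat)
  (gamma : set V -> ('I_q -> Omega V s0) -> probability (Omega V s0) R)
  (Hspec : is_qspec gamma) (Hql : quasilocal gamma)
  (f : ('I_q -> Omega V s0) -> R) (Hf : contq f)
  (L : set V) (HL : finite_subset L) :
  contq (fun eta => fine (prod_int (gamma L eta) (fun sigma => (f sigma)%:E) eta)).
Proof.
case: q gamma Hspec Hql f Hf => [|q'] gamma Hspec Hql f Hf.
  by move=> w w0 c; exact: (Hf w w0 c).
have [lL eL] := (finite_seqP L).1 HL.
subst L.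
move=> w w0 c.
rewrite /prod_int.
under eq_cvg do rewrite (@iint_J R V S s0 q' gamma Hspec lL HL f) /=.
rewrite (@iint_J R V S s0 q' gamma Hspec lL HL f) /=.
exact: (@J_cont R V S s0 q' gamma Hspec lL HL Hql f Hf q'.+1 w w w0 w0 c c).
Qed.
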